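(* Let $u(t)=\sum_{i=1}^M s_i(t)e^{j2\pi f_it}$ be a signal in the class $\mathcal{M}_2$ described in the context, and consider an L-shaped array with $2N-1$ sensors ($N$ along each axis, with a common sensor at the origin) and distance $d$ between adjacent sensors. Let $\alpha_i=f_i\cos\theta_i$, $\beta_i=f_i\sin\theta_i$, and suppose they lie on the grid $\{\delta l\}_{l=-L_0}^{L_0}$ with $L_0=\frac{f_{\text{Nyq}}}{2\delta}$; set $L=2L_0+1$. Let $\mathbf{G}\in\mathbb{C}^{(2N-1)\times L^2}$ have entries, for $l=0,\dots,L^2-1$ with $l_1=(l\bmod L)-L_0$ and $l_2=\lfloor l/L\rfloor-L_0$: $G_{n,l}=e^{j2\pi\frac{dn}{c}\delta l_1}$ for $0\le n\le N-1$ and $G_{n,l}=e^{j2\pi\frac{d(n-N+1)}{c}\delta l_2}$ for $N\le n\le 2N-2$. Let $\mathbf{R}=\mathbf{G}\mathbf{R}_w^g\mathbf{G}^H$, where $\mathbf{R}_w^g$ is the $L^2\times L^2$ diagonal matrix whose only nonzero entries are $\mathbb{E}[|w_i|^2]$ at the $M$ indices corresponding to the pairs $(\alpha_i,\beta_i)$, and let $\mathbf{r}_w^g$ be the diagonal of $\mathbf{R}_w^g$, so that $\mathrm{vec}(\mathbf{R})=(\bar{\mathbf{G}}\odot\mathbf{G})\mathbf{r}_w^g$. If (c1) $d<\frac{c}{f_{\text{Nyq}}}$, (c2) $N>M$, and (c3) $\mathrm{spark}(\mathbf{G})=N+1$, then the equation $\mathrm{vec}(\mathbf{R})=(\bar{\mathbf{G}}\odot\mathbf{G})\mathbf{r}$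 has a unique $M$-sparse solution $\mathbf{r}=\mathbf{r}_w^g$.
   Context: Class $\mathcal{M}_2$: $u$ is complex valued with Fourier transform supported in $[-f_{\text{Nyq}}/2,f_{\text{Nyq}}/2]$, each $s_i$ has Fourier transform supported in $[-B/2,B/2]$, $\min_{i\neq j}|f_i-f_j|>B$; the $s_i$ are wide-sense stationary, zero mean, mutually uncorrelated with nonzero variances; transmission $i$ has unknown angle of arrival $\theta_i$ in the $xz$-plane, $|\theta_i|<90^\circ$, and $f_i\cos\theta_i$ (resp. $f_i\sin\theta_i$) are pairwise distinct. $c>0$ is the propagation speed. Each sensor multiplies by a common periodic function $p(t)$, low-pass filters and samples; $w_i[k]$ denotes the resulting baseband samples of transmission $i$, and the stacked sample vector $\mathbf{v}$ of both axes has correlation $\mathbb{E}[\mathbf{v}\mathbf{v}^H]=\mathbf{R}$. $\mathrm{vec}(\cdot)$ stacks columns, $\bar{\mathbf{G}}$ is the entrywise complex conjugate, $\odot$ is the Khatri–Rao (column-wise Kronecker) product, and $\mathrm{spark}$ is the smallest number of linearly dependent columns. A vector is $M$-sparse if it has at most $M$ nonzero entries. *)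

(* Defs.v *)
From HB Require Import structures.
From mathcomp Require Import all_boot all_order all_algebra.
From mathcomp Require Import reals trigo.
From mathcomp Require Import complex.

Set Implicit Arguments.
Unset Strict Implicit.
Unset Printing Implicit Defensive.

Import Order.TTheory GRing.Theory Num.Theory.
Local Open Scope ring_scope.

Definition cexp2pi {R : realType} (x : R) : R[i] :=
  Complex (cos (2 * pi * x)) (sin (2 * pi * x)).

Definition cconjmx {R : realType} {m n : nat} (A : 'M[R[i]]_(m, n)) :
  'M[R[i]]_(m, n) := map_mx (@conjc R) A.

Definition adjmx {R : realType} {m n : nat} (A : 'M[R[i]]_(m, n)) :
  'M[R[i]]_(n, m) := (cconjmx A)^T.

(* vec(.): stacks the columns; vec A at index i + m*j is A i j. *)
Definition vecmx {T : Type} {m n : nat} (A : 'M[T]_(m, n)) : 'cV[T]_(n * m) :=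
  (mxvec A^T)^T.

(* Khatri-Rao (column-wise Kronecker) product: column l of A ⊙ B is
   (col l A) ⊗ (col l B), entry a*p+b equal to A a l * B b l. *)
Definition khatri_rao {K : comNzRingType} {m p n : nat}
  (A : 'M[K]_(m, n)) (B : 'M[K]_(p, n)) : 'M[K]_(m * p, n) :=
  \matrix_(k < m * p, l < n) (mxvec (col l A *m (col l B)^T)) 0 k.

Definition vsupp {K : nzRingType} {n : nat} (x : 'cV[K]_n) : {set 'I_n} :=
  [set j | x j 0 != 0].

Definition sparse {K : nzRingType} {n : nat} (M : nat) (x : 'cV[K]_n) : Prop :=
  (#|vsupp x| <= M)%N.

Definition cols_dependent {K : nzRingType} {m n : nat} (A : 'M[K]_(m, n))
  (S : {set 'I_n}) : Prop :=
  exists x : 'cV[K]_n, x != 0 /\ vsupp x \subset S /\ A *m x = 0.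

Definition spark_is {K : nzRingType} {m n : nat} (A : 'M[K]_(m, n)) (k : nat) : Prop :=
  (exists S : {set 'I_n}, #|S| = k /\ cols_dependent A S) /\
  (forall S : {set 'I_n}, cols_dependent A S -> (k <= #|S|)%N).

(* The L-shaped array manifold on the grid: rows 0..N-1 are the x-axis
   sensors (n*d), rows N..2N-2 the z-axis sensors ((n-N+1)*d); column l
   corresponds to l1 = (l mod L) - L0, l2 = floor(l/L) - L0, L = 2L0+1. *)
Definition Lgrid (L0 : nat) : nat := (2 * L0 + 1)%N.

Definition Gmat {R : realType} (N L0 : nat) (d c delta : R) :
  'M[R[i]]_((2 * N - 1)%N, (Lgrid L0 * Lgrid L0)%N) :=
  \matrix_(n, l)
    let l1 : int := ((l %% Lgrid L0)%N)%:Z - L0%:Z in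
    let l2 : int := ((l %/ Lgrid L0)%N)%:Z - L0%:Z in
    if (n < N)%N then cexp2pi (d * n%:R / c * delta * l1%:~R)
    else cexp2pi (d * (n - N + 1)%N%:R / c * delta * l2%:~R).

Definition grid_index (L0 : nat) (a b : int) : nat :=
  (absz (a + L0%:Z)%R + Lgrid L0 * absz (b + L0%:Z)%R)%N.

Definition rwg {R : realType} (M L0 : nat) (a b : 'I_M -> int) (p : 'I_M -> R) :
  'cV[R[i]]_(Lgrid L0 * Lgrid L0) :=
  \col_(l < Lgrid L0 * Lgrid L0)
    \sum_(i < M | (l : nat) == grid_index L0 (a i) (b i)) ((p i)%:C)%C.

(* Main.v *)
Require Import Defs.
From HB Require Import structures.
From mathcomp Require Import all_boot all_order all_algebra.
From mathcomp Require Import reals trigo.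
From mathcomp Require Import complex.
Import Order.TTheory GRing.Theory Num.Theory.
Local Open Scope ring_scope.

Section Helpers.
Variable R : realType.

Lemma vec_id (m n : nat) (G : 'M[R[i]]_(m, n)) (x : 'cV_n) :
  vecmx (G *m diag_mx x^T *m adjmx G) = khatri_rao (cconjmx G) G *m x.
Proof.
apply/matrixP => k z; rewrite ord1 {z}.
case/mxvec_indexP: k => i j.
rewrite mul_mx_diag /vecmx !mxE mxvecE !mxE.
apply: eq_bigr => l _.
rewrite !mxE mxvecE !mxE big_ord1 !mxE.
by rewrite mulrC mulrA.
Qed.

Lemma vecmx_inj (T : Type) (m n : nat) : injective (@vecmx T m n).
Proof.
move=> A B /trmx_inj /(congr1 vec_mx); rewrite !mxvecK; exact: trmx_inj.
Qed.

Lemma exists_y (m n : nat) (G : 'M[R[i]]_(m, n)) (S : {set 'I_n}) (u : 'I_n) :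
  (forall x : 'cV_n, G *m x = 0 -> vsupp x \subset S -> x = 0) ->
  u \in S ->
  exists y : 'cV_m, forall s, s \in S -> (adjmx G *m y) s 0 = (s == u)%:R.
Proof.
move=> HK uS.
set C := cconjmx G.
set P : 'M[R[i]]_n := diag_mx (\row_j ((j \in S)%:R)).
have tsub : (delta_mx (0 : 'I_1) u <= C *m P)%MS.
  rewrite submxE -rowE.
  set K := cokermx (C *m P).
  have hK : C *m P *m K = 0 by exact: mulmx_coker.
  clearbody K.
  apply/eqP/matrixP => z j; rewrite ord1 !mxE.
  have GC : G = map_mx (@conjc R) C.
    by apply/matrixP => a b; rewrite !mxE conjcK.
  have hPv : P *m col j K = 0.
    apply: (map_mx_inj (f:=@conjc R)); rewrite map_mx0.
    apply: HK.
      by rewrite GC -map_mxM colE !mulmxA hK mul0mx map_mx0.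
    rewrite /vsupp; apply/subsetP => k; rewrite inE mxE /P mul_diag_mx !mxE.
    by case: (k \in S) => //; rewrite /= mul0r conjc0 eqxx.
  move/matrixP: hPv => /(_ u 0).
  by rewrite /P mul_diag_mx !mxE uS mul1r.
case/submxP: tsub => D hD.
exists D^T => s sS.
move/matrixP: hD => /(_ 0 s).
rewrite /P mul_mx_diag !mxE eqxx /= => ->.
by apply: eq_bigr => k _; rewrite /adjmx /C !mxE sS mulr1 mulrC.
Qed.

Lemma spark_inj (m n k : nat) (G : 'M[R[i]]_(m, n)) :
  spark_is G k.+1 -> forall x, G *m x = 0 -> (#|vsupp x| <= k)%N -> x = 0.
Proof.
move=> [_ H] x Hx Hc; apply/eqP; apply/negPn/negP => nx.
have := H (vsupp x) (ex_intro _ x (conj nx (conj (subxx _) Hx))).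
by rewrite ltnNge Hc.
Qed.

Lemma rwg_sparse (M L0 : nat) (a b : 'I_M -> int) (p : 'I_M -> R) :
  (#|vsupp (rwg L0 a b p)| <= M)%N.
Proof.
set V := vsupp _.
pose h (l : 'I_(Lgrid L0 * Lgrid L0)) :=
  [pick i | (l : nat) == grid_index L0 (a i) (b i)].
have hex : forall l, l \in V -> exists i, h l = Some i /\
    (l : nat) == grid_index L0 (a i) (b i).
  move=> l; rewrite inE mxE /h.
  case: pickP => [i Hi|H]; first by exists i.
  by rewrite big_pred0 ?eqxx.
have inj : {in V &, injective h}.
  move=> l l' /hex [i [hi ei]] /hex [i' [hi' ei']]; rewrite hi hi' => -[Ei].
  by apply: val_inj; rewrite /= (eqP ei) (eqP ei') Ei.
rewrite -(card_in_imset inj).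
apply: leq_trans (subset_leq_card (_ : h @: V \subset [set~ None])) _.
  by apply/subsetP => o /imsetP [l /hex [i [hi _]] ->]; rewrite !inE hi.
by rewrite cardsC1 card_option card_ord.
Qed.
End Helpers.

Theorem theorem5 (R : realType) (M N L0 : nat) (c d delta fNyq : R)
    (f theta : 'I_M -> R) (a b : 'I_M -> int) (p : 'I_M -> R) :
    0 < c -> 0 < d -> 0 < delta ->
    fNyq = 2 * delta * L0%:R ->
    (* angles of arrival in (-90deg, 90deg) *)
    (forall i, `|theta i| < pi / 2) ->
    (* alpha_i = f_i cos theta_i, beta_i = f_i sin theta_i pairwise distinct *)
    (forall i j, i != j -> f i * cos (theta i) != f j * cos (theta j)) ->
    (forall i j, i != j -> f i * sin (theta i) != f j * sin (theta j)) ->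
    (* alpha_i, beta_i lie on the grid {delta l}_{l=-L0}^{L0} *)
    (forall i, f i * cos (theta i) = delta * (a i)%:~R /\ `|a i| <= L0%:Z) ->
    (forall i, f i * sin (theta i) = delta * (b i)%:~R /\ `|b i| <= L0%:Z) ->
    (* E[|w_i|^2] nonzero *)
    (forall i, 0 < p i) ->
    let G := Gmat N L0 d c delta in
    let rw := rwg L0 a b p in
    let Rmx := G *m diag_mx rw^T *m adjmx G in
    d < c / fNyq ->                     (* (c1) *)
    (M < N)%N ->                        (* (c2) *)
    spark_is G N.+1 ->                  (* (c3) *)
    (sparse M rw /\ vecmx Rmx = khatri_rao (cconjmx G) G *m rw) /\
    (forall r : 'cV[R[i]]_(Lgrid L0 * Lgrid L0),
        sparse M r -> vecmx Rmx = khatri_rao (cconjmx G) G *m r -> r = rw).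
Proof.
move=> c0 d0 del0 fN hth ha hb hga hgb hp G rw Rmx hc1 hMN hsp.
have vecR : vecmx Rmx = khatri_rao (cconjmx G) G *m rw by exact: vec_id.
have srw : sparse M rw by exact: rwg_sparse.
split => // r sr hr.
have E : G *m diag_mx r^T *m adjmx G = Rmx.
  by apply: vecmx_inj; rewrite vec_id -hr vecR.
have HK := @spark_inj R _ _ _ G hsp.
apply/matrixP => u z; rewrite ord1 {z}.
set S := u |: vsupp rw.
have cS : (#|S| <= M.+1)%N.
  by rewrite cardsU1 -add1n leq_add ?leq_b1.
have uS : u \in S by rewrite setU11.
have [y hy] := @exists_y R _ _ G S u (fun x Gx sub =>
  HK x Gx (leq_trans (subset_leq_card sub) (leq_trans cS hMN))) uS.
set g := adjmx G *m y.
set zr := diag_mx r^T *m g.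
set zw := diag_mx rw^T *m g.
have Gz : G *m (zr - zw) = 0.
  by rewrite mulmxBr /zr /zw /g !mulmxA E /Rmx subrr.
have hg : forall s, s \in S -> g s 0 = (s == u)%:R by [].
clearbody g.
have zE : forall x j, (diag_mx x^T *m g) j 0 = x j 0 * g j 0.
  by move=> x j; rewrite mul_diag_mx !mxE.
have subE : forall (A B : 'cV[R[i]]_(Lgrid L0 * Lgrid L0)) j,
    (A - B) j 0 = A j 0 - B j 0 by move=> A B j; rewrite !mxE.
have zeq : zr = zw.
  apply/eqP; rewrite -subr_eq0; apply/eqP. apply: (HK _ Gz).
  apply: (leq_trans _ hMN).
  apply: leq_trans (subset_leq_card (_ : vsupp (zr - zw) \subset u |: vsupp r)) _.
    apply/subsetP => j; rewrite !inE /zr /zw subE !zE.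
    case: (eqVneq j u) => //= ju.
    case: (eqVneq (r j 0) 0) => [->|] //.
    rewrite mul0r sub0r oppr_eq0.
    case: (eqVneq (rw j 0) 0) => [->|nz]; first by rewrite mul0r eqxx.
    have jS : j \in S by rewrite /S !inE nz orbT.
    by rewrite hg // (negbTE ju) mulr0 eqxx.
  by rewrite cardsU1 -add1n leq_add ?leq_b1.
move/matrixP: zeq => /(_ u 0).
by rewrite /zr /zw !zE hg // eqxx !mulr1.
Qed.
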